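(* Let $\overline f:[a,b]\to\mathbb{R}_\mathcal{I}$ be continuous on $[a,b]$. Then $\overline f$ is interval Riemann integrable on $[a,b]$.
   Context: $\mathbb{R}_\mathcal{I}$ denotes the set of all closed intervals $\overline a=[a_l,a_r]$ with $a_l<a_r$ (real numbers are not regarded as degenerate intervals). Each $\overline a$ is written as $\overline a=\langle a_c;a_w\rangle$ with center $a_c=\frac{a_l+a_r}{2}$ and radius $a_w=\frac{a_r-a_l}{2}>0$. The operations on $\mathbb{R}_\mathcal{I}$ are: addition $\overline a+\overline b=\langle a_c+b_c;\,a_w b_w\rangle$ and scalar multiplication $k\overline a=\langle k a_c;\,a_w^{k}\rangle$ for $k\in\mathbb{R}$. The distance is $d(\overline a,\overline b)=\sqrt{(a_c-b_c)^2+(\ln a_w-\ln b_w)^2}$. An interval-valued function $\overline f(t)=\langle f_c(t);f_w(t)\rangle$ on $[a,b]$ is continuous at $x$ if for every $\varepsilon>0$ there is $\delta>0$ with $d(\overline f(x),\overline f(y))<\varepsilon$ whenever $y\in[a,b]$, $|y-x|<\delta$; continuous on $[a,b]$ means continuous at every point. $\overline f$ is interval Riemann integrable on $[a,b]$ with integral $\overline A\in\mathbb{R}_\mathcal{I}$, written $\overline A=(IR)\int_a^b\overline f(t)\,\mathrm{d}t$, if for every $\varepsilon>0$ there is $\delta>0$ such that for every partition $a=t_0<t_1<\dots<t_n=b$ with $t_i-t_{i-1}<\delta$ and every choice of tags $\xi_i\in[t_{i-1},t_i]$, one has $d\big(\sum_{i=1}^n \overline f(\xi_i)(t_i-t_{i-1}),\overline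 A\big)<\varepsilon$, where the sum and scalar products use the operations above. *)

(* Defs.v *)
From Stdlib Require Import Reals Lra.
Open Scope R_scope.

(* An element of R_I: an interval <c; w> with center c and radius w > 0. *)
Record RI : Type := mkRI { rc : R; rw : R; rw_pos : 0 < rw }.

Definition ri_add (x y : RI) : RI :=
  mkRI (rc x + rc y) (rw x * rw y) (Rmult_lt_0_compat _ _ (rw_pos x) (rw_pos y)).

Definition ri_scal (k : R) (x : RI) : RI :=
  mkRI (k * rc x) (Rpower (rw x) k) (exp_pos _).

Definition ri_zero : RI := mkRI 0 1 Rlt_0_1.

Definition ri_dist (x y : RI) : R :=
  sqrt ((rc x - rc y) ^ 2 + (ln (rw x) - ln (rw y)) ^ 2).

Definition ri_continuous_at (f : R -> RI) (a b x : R) : Prop :=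
  forall eps, 0 < eps -> exists delta, 0 < delta /\
    forall y, a <= y <= b -> Rabs (y - x) < delta -> ri_dist (f x) (f y) < eps.

Definition ri_continuous_on (f : R -> RI) (a b : R) : Prop :=
  forall x, a <= x <= b -> ri_continuous_at f a b x.

Fixpoint ri_riemann_sum (f : R -> RI) (t xi : nat -> R) (n : nat) : RI :=
  match n with
  | O => ri_zero
  | S m => ri_add (ri_riemann_sum f t xi m) (ri_scal (t (S m) - t m) (f (xi (S m))))
  end.

Definition tagged_partition (a b delta : R) (n : nat) (t xi : nat -> R) : Prop :=
  t O = a /\ t n = b /\
  (forall i, (1 <= i <= n)%nat -> t (i - 1)%nat < t i /\ t i - t (i - 1)%nat < delta
                                 /\ t (i - 1)%nat <= xi i <= t i).

Definition ri_integral (f : R -> RI) (a b : R) (A : RI) : Prop :=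
  forall eps, 0 < eps -> exists delta, 0 < delta /\
    forall n t xi, tagged_partition a b delta n t xi ->
      ri_dist (ri_riemann_sum f t xi n) A < eps.

Definition ri_integrable (f : R -> RI) (a b : R) : Prop :=
  exists A : RI, ri_integral f a b A.

(* Main.v *)
Require Import Defs.
From Stdlib Require Import Reals Lra Lia.
From Coquelicot Require Import Coquelicot.
Open Scope R_scope.

Fixpoint rsum (g : R -> R) (t xi : nat -> R) (n : nat) : R :=
  match n with
  | O => 0
  | S m => rsum g t xi m + (t (S m) - t m) * g (xi (S m))
  end.

Lemma part_bounds a b d n t xi : tagged_partition a b d n t xi ->
  forall i, (i <= n)%nat -> a <= t i <= b.
Proof.
  intros [H0 [Hn H]].
  assert (Ha : forall i, (i <= n)%nat -> a <= t i).
  { induction i; intros Hi. rewrite H0; lra.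
    destruct (H (S i)) as [H1 _]. lia.
    replace (S i - 1)%nat with i in H1 by lia.
    specialize (IHi ltac:(lia)); lra. }
  assert (Hb : forall k i, (i + k = n)%nat -> t i <= b).
  { induction k; intros i Hi. replace i with n by lia. rewrite Hn; lra.
    destruct (H (S i)) as [H1 _]. lia.
    replace (S i - 1)%nat with i in H1 by lia.
    specialize (IHk (S i) ltac:(lia)); lra. }
  intros i Hi; split; [apply Ha; lia| apply (Hb (n - i)%nat); lia].
Qed.

Definition clamp a b x := Rmax a (Rmin b x).

Lemma clamp_in a b x : a <= b -> a <= clamp a b x <= b.
Proof. intros; unfold clamp, Rmax, Rmin; repeat destruct Rle_dec; lra. Qed.

Lemma clamp_id a b x : a <= x <= b -> clamp a b x = x.
Proof. intros; unfold clamp, Rmax, Rmin; repeat destruct Rle_dec; lra. Qed.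

Lemma clamp_lip a b x y : a <= b -> Rabs (clamp a b y - clamp a b x) <= Rabs (y - x).
Proof.
  intros; unfold clamp, Rmax, Rmin; repeat destruct Rle_dec;
  unfold Rabs; repeat destruct Rcase_abs; lra.
Qed.

Lemma real_riemann (g : R -> R) a b : a < b ->
  (forall x, a <= x <= b -> forall eps, 0 < eps -> exists delta, 0 < delta /\
     forall y, a <= y <= b -> Rabs (y - x) < delta -> Rabs (g x - g y) < eps) ->
  exists I, forall eps, 0 < eps -> exists delta, 0 < delta /\
    forall n t xi, tagged_partition a b delta n t xi -> Rabs (rsum g t xi n - I) < eps.
Proof.
  intros Hab Hc.
  set (g' := fun x => g (clamp a b x)).
  assert (Hcont : forall x, continuous g' x).
  { intros x. apply continuity_pt_filterlim.
    intros eps Heps.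
    destruct (Hc (clamp a b x) (clamp_in a b x ltac:(lra)) eps Heps) as [d [Hd Hd2]].
    exists d; split; [exact Hd|].
    intros y [_ Hy]. simpl in Hy |- *. unfold R_dist in *.
    unfold g'. rewrite Rabs_minus_sym. apply Hd2. apply clamp_in; lra.
    eapply Rle_lt_trans. apply clamp_lip. lra. exact Hy. }
  assert (Hex : forall u v, ex_RInt g' u v).
  { intros u v. apply (ex_RInt_continuous (V := R_CompleteNormedModule)). intros; apply Hcont. }
  exists (RInt g' a b).
  intros eps Heps.
  set (e' := eps / (2 * (b - a))).
  assert (He' : 0 < e'). { unfold e'. apply Rdiv_lt_0_compat; lra. }
  destruct (unifcont_normed_1d (V := R_NormedModule) g' a b (fun x _ => Hcont x) (mkposreal e' He')) as [[d Hd] Hu].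
  simpl in Hu.
  exists d; split; [exact Hd|].
  intros n t xi HP.
  pose proof (part_bounds _ _ _ _ _ _ HP) as Hbd.
  destruct HP as [H0 [Hn H]].
  assert (Hind : forall m, (m <= n)%nat -> Rabs (rsum g t xi m - RInt g' a (t m)) <= e' * (t m - a)).
  { induction m; intros Hm.
    - simpl. rewrite H0, RInt_point. unfold zero; simpl. rewrite Rminus_0_r, Rabs_R0; lra.
    - destruct (H (S m)) as [H1 [H2 H3]]. lia.
      replace (S m - 1)%nat with m in * by lia.
      specialize (IHm ltac:(lia)).
      assert (Bm := Hbd m ltac:(lia)). assert (Bm1 := Hbd (S m) Hm).
      simpl rsum.
      rewrite <- (RInt_Chasles g' a (t m) (t (S m))) by apply Hex.
      assert (Hgx : g (xi (S m)) = g' (xi (S m))).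
      { unfold g'. rewrite clamp_id; auto. lra. }
      assert (Hloc : Rabs ((t (S m) - t m) * g (xi (S m)) - RInt g' (t m) (t (S m)))
                     <= (t (S m) - t m) * e').
      { replace ((t (S m) - t m) * g (xi (S m)) - RInt g' (t m) (t (S m)))
          with (RInt (fun x => g' (xi (S m)) - g' x) (t m) (t (S m))).
        apply abs_RInt_le_const. lra.
        apply (ex_RInt_continuous (V := R_CompleteNormedModule)); intros. apply (continuous_minus (fun _ => g' (xi (S m))) g').
        apply continuous_const. apply Hcont.
        intros s Hs.
        assert (Hb := Hu (xi (S m)) s ltac:(lra) ltac:(lra)).
        assert (Hball : ball (xi (S m)) d s).
        { change (Rabs (s - xi (S m)) < d). unfold Rabs; destruct Rcase_abs; lra. }
        specialize (Hb Hball). unfold ball_norm in Hb. simpl in Hb.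
        unfold norm, minus, plus, opp in Hb; simpl in Hb. unfold abs in Hb; simpl in Hb.
        rewrite Rabs_minus_sym. unfold Rminus; lra.
        rewrite (RInt_minus (fun _ => g' (xi (S m))) g') by (apply ex_RInt_const || apply Hex).
        rewrite RInt_const, Hgx. reflexivity. }
      unfold plus; simpl.
      replace (rsum g t xi m + (t (S m) - t m) * g (xi (S m)) - (RInt g' a (t m) + RInt g' (t m) (t (S m))))
        with ((rsum g t xi m - RInt g' a (t m)) + ((t (S m) - t m) * g (xi (S m)) - RInt g' (t m) (t (S m)))) by ring.
      eapply Rle_trans. apply Rabs_triang. replace (e' * (t (S m) - a)) with (e' * (t m - a) + (t (S m) - t m) * e') by ring. apply Rplus_le_compat; assumption. }
  specialize (Hind n (le_n n)). rewrite Hn in Hind.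
  assert (e' * (b - a) = eps / 2). { unfold e'. field. lra. }
  lra.
Qed.
Lemma rc_sum f t xi n : rc (ri_riemann_sum f t xi n) = rsum (fun x => rc (f x)) t xi n.
Proof. induction n; simpl; auto. rewrite IHn; ring. Qed.

Lemma rw_sum f t xi n : ln (rw (ri_riemann_sum f t xi n)) = rsum (fun x => ln (rw (f x))) t xi n.
Proof.
  induction n; simpl. apply ln_1.
  rewrite ln_mult by (apply rw_pos || apply exp_pos).
  rewrite IHn. unfold Rpower. rewrite ln_exp. ring.
Qed.

Lemma dist_ge1 x y : Rabs (rc x - rc y) <= ri_dist x y.
Proof.
  unfold ri_dist. rewrite <- sqrt_Rsqr_abs. apply sqrt_le_1_alt.
  unfold Rsqr. simpl. match goal with |- _ <= ?p * (?p * 1) + ?q * (?q * 1) => pose proof (Rle_0_sqr q); pose proof (Rle_0_sqr p); unfold Rsqr in *; lra end.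
Qed.

Lemma dist_ge2 x y : Rabs (ln (rw x) - ln (rw y)) <= ri_dist x y.
Proof.
  unfold ri_dist. rewrite <- sqrt_Rsqr_abs. apply sqrt_le_1_alt.
  unfold Rsqr. simpl. match goal with |- _ <= ?p * (?p * 1) + ?q * (?q * 1) => pose proof (Rle_0_sqr q); pose proof (Rle_0_sqr p); unfold Rsqr in *; lra end.
Qed.

Theorem theorem5p2 (a b : R) (f : R -> RI) :
  a < b -> ri_continuous_on f a b -> ri_integrable f a b.
Proof.
  intros Hab Hc.
  destruct (real_riemann (fun x => rc (f x)) a b Hab) as [I1 H1].
  { intros x Hx eps Heps. destruct (Hc x Hx eps Heps) as [d [Hd Hd2]].
    exists d; split; auto. intros y Hy Hxy.
    eapply Rle_lt_trans. apply dist_ge1. auto. }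
  destruct (real_riemann (fun x => ln (rw (f x))) a b Hab) as [I2 H2].
  { intros x Hx eps Heps. destruct (Hc x Hx eps Heps) as [d [Hd Hd2]].
    exists d; split; auto. intros y Hy Hxy.
    eapply Rle_lt_trans. apply dist_ge2. auto. }
  exists (mkRI I1 (exp I2) (exp_pos I2)).
  intros eps Heps.
  destruct (H1 (eps/2) ltac:(lra)) as [d1 [Hd1 K1]].
  destruct (H2 (eps/2) ltac:(lra)) as [d2 [Hd2 K2]].
  exists (Rmin d1 d2); split. apply Rmin_pos; auto.
  intros n t xi HP.
  assert (HP1 : tagged_partition a b d1 n t xi).
  { destruct HP as [A [B C]]; split; [|split]; auto. intros i Hi.
    destruct (C i Hi) as [C1 [C2 C3]]. split; auto. split; auto.
    eapply Rlt_le_trans. exact C2. apply Rmin_l. }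
  assert (HP2 : tagged_partition a b d2 n t xi).
  { destruct HP as [A [B C]]; split; [|split]; auto. intros i Hi.
    destruct (C i Hi) as [C1 [C2 C3]]. split; auto. split; auto.
    eapply Rlt_le_trans. exact C2. apply Rmin_r. }
  specialize (K1 n t xi HP1). specialize (K2 n t xi HP2).
  unfold ri_dist. simpl. rewrite ln_exp, rc_sum, rw_sum.
  set (u := rsum _ t xi n - I1) in *. set (v := rsum _ t xi n - I2) in *.
  rewrite <- (sqrt_pow2 eps) by lra.
  apply sqrt_lt_1_alt. split. nra.
  replace (u * (u * 1)) with (Rabs u * Rabs u) by (rewrite <- Rabs_mult, Rabs_right; [ring| nra]). replace (v * (v * 1)) with (Rabs v * Rabs v) by (rewrite <- Rabs_mult, Rabs_right; [ring| nra]).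
  assert (0 <= Rabs u) by apply Rabs_pos. assert (0 <= Rabs v) by apply Rabs_pos.
  nra.
Qed.
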